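(* There are uncountably many minor-closed classes $\mathcal{C}$ of countable graphs that have a universal element, and uncountably many minor-closed classes of countable graphs that do not have a universal element.
   Context: Graphs may be infinite (countable). A graph $H$ is a minor of a graph $G$ if there are pairwise disjoint connected subgraphs $B_v\subseteq G$, $v\in V(H)$, and for every edge $uv\in E(H)$ an edge of $G$ with one endvertex in $B_u$ and the other in $B_v$. A class $\mathcal{C}$ is minor-closed if every minor of a member of $\mathcal{C}$ is in $\mathcal{C}$. A universal element of $\mathcal{C}$ is a graph $U\in\mathcal{C}$ such that every $G\in\mathcal{C}$ is a minor of $U$. *)

(* Defs.v *)
(** A countable graph: vertex set a subset of nat (this covers every
    finite or countably infinite graph up to isomorphism), with a
    symmetric irreflexive adjacency relation between vertices. *)
Record cgraph := CGraph {
  vert : nat -> Prop;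
  adj : nat -> nat -> Prop;
  adj_sym : forall x y, adj x y -> adj y x;
  adj_irrefl : forall x, ~ adj x x;
  adj_vert : forall x y, adj x y -> vert x /\ vert y
}.

Inductive walk (G : cgraph) (S : nat -> Prop) : nat -> nat -> Prop :=
| walk_nil : forall x, S x -> walk G S x x
| walk_cons : forall x z y, S x -> adj G x z -> walk G S z y -> walk G S x y.

Definition connected_in (G : cgraph) (S : nat -> Prop) : Prop :=
  (forall x, S x -> vert G x) /\
  (exists x, S x) /\
  (forall x y, S x -> S y -> walk G S x y).

Definition minor (H G : cgraph) : Prop :=
  exists B : nat -> nat -> Prop,
    (forall v, vert H v -> connected_in G (B v)) /\
    (forall u v, vert H u -> vert H v -> u <> v ->
       forall x, B u x -> B v x -> False) /\
    (forall u v, adj H u v -> exists x y, B u x /\ B v y /\ adj G x y).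

Definition minor_closed (C : cgraph -> Prop) : Prop :=
  forall G H, C G -> minor H G -> C H.

Definition has_universal (C : cgraph -> Prop) : Prop :=
  exists U, C U /\ forall G, C G -> minor G U.

Definition uncountably_many (P : (cgraph -> Prop) -> Prop) : Prop :=
  ~ exists f : nat -> (cgraph -> Prop),
      forall C, P C -> exists n, forall G, f n G <-> C G.

(* Main.v *)
Require Import Defs.
From Stdlib Require Import Arith Lia List Classical ClassicalEpsilon Cantor.
Import ListNotations.

Inductive T : Type := L : T | N : (nat -> T) -> T.

Fixpoint enc (l : list nat) : nat :=
  match l with [] => 0 | a :: l' => S (Cantor.to_nat (a, enc l')) end.
Fixpoint decf (k n : nat) : list nat :=
  match k with
  | 0 => []
  | S k' => match n with 0 => [] | S n' => fst (Cantor.of_nat n') :: decf k' (snd (Cantor.of_nat n')) end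
  end.
Definition dec n := decf (S n) n.

Lemma decf_enc : forall l k, enc l < k -> decf k (enc l) = l.
Proof.
  induction l as [|a l IH]; intros k Hk.
  - destruct k; reflexivity.
  - destruct k as [|k]; [simpl in Hk; lia|].
    change (fst (Cantor.of_nat (Cantor.to_nat (a, enc l))) :: decf k (snd (Cantor.of_nat (Cantor.to_nat (a, enc l)))) = a :: l).
    rewrite Cantor.cancel_of_to. cbn [fst snd]. f_equal. apply IH.
    change (S (Cantor.to_nat (a, enc l)) < S k) in Hk.
    pose proof (Cantor.to_nat_non_decreasing a (enc l)). lia.
Qed.

Lemma dec_enc l : dec (enc l) = l.
Proof. apply decf_enc; lia. Qed.

Fixpoint sub (t : T) (l : list nat) : option T :=
  match l with
  | [] => Some t
  | j :: l' => match sub t l' with Some (N g) => Some (g j) | _ => None end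
  end.

Definition isv (t : T) (x : nat) : Prop := enc (dec x) = x /\ sub t (dec x) <> None.
Definition gadj (t : T) x y := isv t x /\ isv t y /\
  ((exists j, dec x = j :: dec y) \/ (exists j, dec y = j :: dec x)).

Lemma gadj_sym t x y : gadj t x y -> gadj t y x.
Proof. intros (H1 & H2 & H3). split; [exact H2|split; [exact H1|]]. destruct H3; [right|left]; assumption. Qed.
Lemma gadj_irr t x : ~ gadj t x x.
Proof.
  intros (_ & _ & [[j H]|[j H]]); apply (f_equal (@length nat)) in H; simpl in H; lia.
Qed.
Lemma gadj_vert t x y : gadj t x y -> isv t x /\ isv t y.
Proof. intros (H1 & H2 & _); auto. Qed.

Definition Gr (t : T) : cgraph := CGraph (isv t) (gadj t) (gadj_sym t) (gadj_irr t) (gadj_vert t).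

Inductive desc : T -> T -> Prop :=
| desc_refl : forall s, desc s s
| desc_step : forall g j u, desc (g j) u -> desc (N g) u.

Lemma desc_trans : forall a b c, desc a b -> desc b c -> desc a c.
Proof. induction 1; intros; auto. econstructor; eauto. Qed.

Fixpoint R (t s : T) : Prop :=
  match t with
  | L => True
  | N f => exists g, desc s (N g) /\ forall i, exists j, R (f i) (g j)
  end.

Lemma R_mono : forall t s s', desc s s' -> R t s' -> R t s.
Proof.
  destruct t; simpl; auto. intros s s' Hd [g [Hg H]]. exists g; split; eauto using desc_trans.
Qed.

Definition pdesc t d := exists g j, t = N g /\ desc (g j) d.

Lemma desc_N_child : forall x g j, desc x (N g) -> desc x (g j).
Proof.
  intros x g j H. remember (N g) as y. induction H.
  - subst. econstructor. constructor.
  - econstructor; eauto.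
Qed.

Lemma desc_pdesc : forall x g j, desc x (N g) -> pdesc x (g j).
Proof.
  intros x g j H. remember (N g) as y. destruct H as [s0|g0 j0 u Hu].
  - subst. exists g, j. split; [reflexivity| constructor].
  - subst. exists g0, j0. split; [reflexivity|]. apply desc_N_child; auto.
Qed.

Lemma pdesc_notR : forall t d, pdesc t d -> ~ R t d.
Proof.
  induction t as [|f IH]; intros d [g [k [Ht Hd]]]; [discriminate|].
  injection Ht; intros; subst g. simpl. intros [g [Hdg HR]].
  destruct (HR k) as [j Hj].
  apply (IH k (g j)); auto.
  assert (Hx : desc (f k) (N g)) by (eapply desc_trans; eauto).
  apply desc_pdesc; auto.
Qed.

Fixpoint fat t := match t with L => L | N f => N (fun n => fat (f (fst (Cantor.of_nat n)))) end.

Inductive Dbl : T -> Prop :=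
| DL : Dbl L
| DN : forall f, (forall i, Dbl (f i)) -> (forall i, exists i', i' <> i /\ f i' = f i) -> Dbl (N f).

Lemma Dbl_fat t : Dbl (fat t).
Proof.
  induction t as [|f IH]; simpl; constructor; auto.
  intros i. exists (Cantor.to_nat (fst (Cantor.of_nat i), S (snd (Cantor.of_nat i)))). split.
  - intro E. apply (f_equal Cantor.of_nat) in E. rewrite Cantor.cancel_of_to in E.
    destruct (Cantor.of_nat i) as [a b]; simpl in E. injection E; lia.
  - rewrite Cantor.cancel_of_to. reflexivity.
Qed.

Lemma desc_fat : forall x y, desc x y -> desc (fat x) (fat y).
Proof.
  induction 1; simpl. constructor.
  apply (desc_step _ (Cantor.to_nat (j, 0))). cbv beta. rewrite Cantor.cancel_of_to. simpl. auto.
Qed.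

Lemma pdesc_fat t d : pdesc t d -> pdesc (fat t) (fat d).
Proof.
  intros [g [j [Ht Hd]]]. subst. simpl.
  eexists; exists (Cantor.to_nat (j, 0)). split; [reflexivity|].
  cbv beta. rewrite Cantor.cancel_of_to. simpl. apply desc_fat; auto.
Qed.

Lemma Dbl_sub : forall a t u, Dbl t -> sub t a = Some u -> Dbl u.
Proof.
  induction a as [|j a IH]; simpl; intros t u HD Hs.
  - injection Hs; intros; subst; auto.
  - destruct (sub t a) as [[|g]|] eqn:E; try discriminate.
    injection Hs; intros; subst.
    pose proof (IH t _ HD E) as HN. inversion HN; auto.
Qed.

Lemma sub_desc : forall q l s x, sub s (q ++ l) = Some x -> exists y, sub s l = Some y /\ desc y x.
Proof.
  induction q as [|j q IH]; simpl; intros l s x Hs.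
  - exists x; split; auto; constructor.
  - destruct (sub s (q ++ l)) as [[|g]|] eqn:E; try discriminate.
    injection Hs; intros; subst.
    destruct (IH l s _ E) as [y [Hy Hd]]. exists y; split; auto. apply desc_N_child; auto.
Qed.

Lemma walk_S : forall G S x y, walk G S x y -> S x.
Proof. destruct 1; auto. Qed.

Lemma walk_mono : forall G (S S' : nat -> Prop) x y, (forall z, S z -> S' z) -> walk G S x y -> walk G S' x y.
Proof. intros G S S' x y HS. induction 1; [constructor; auto | econstructor; eauto]. Qed.

Lemma walk_app : forall G S x y z, walk G S x y -> walk G S y z -> walk G S x z.
Proof. induction 1; intros; auto. econstructor; eauto. Qed.

Definition insub (a l : list nat) := exists p, l = p ++ a.

Lemma Lw : forall s S y z, walk (Gr s) S y z -> forall a, insub a (dec y) -> ~ insub a (dec z) ->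
  exists w j, S w /\ a = j :: dec w.
Proof.
  intros s S y z. induction 1 as [x Hx | x z' y Hx Hadj Hw IH]; intros a Hy Hz.
  - contradiction.
  - destruct (classic (insub a (dec z'))) as [Hi|Hi]; [eauto|].
    destruct Hadj as (_ & _ & [[j Hj]|[j Hj]]).
    + destruct Hy as [p Hp]. destruct p as [|q p'].
      * simpl in Hp. exists z', j. split. eapply walk_S; eauto. congruence.
      * exfalso; apply Hi. exists p'. rewrite Hj in Hp. simpl in Hp. injection Hp; auto.
    + exfalso. apply Hi. destruct Hy as [p Hp]. exists (j :: p). rewrite Hj, Hp. reflexivity.
Qed.

Lemma exists_min (P : nat -> Prop) (f : nat -> nat) :
  (exists x, P x) -> exists x, P x /\ forall y, P y -> f x <= f y.
Proof.
  intros [x Hx].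
  assert (H: forall n x, f x <= n -> P x -> exists m, P m /\ forall y, P y -> f m <= f y).
  { induction n as [n IH] using lt_wf_ind. intros x0 Hle HP.
    destruct (classic (exists y, P y /\ f y < f x0)) as [[y [Py Hy]]|Hn].
    - apply (IH (f y)) with y; auto; lia.
    - exists x0; split; auto. intros y Py. destruct (le_lt_dec (f x0) (f y)); auto.
      exfalso; eauto. }
  eapply H; eauto.
Qed.

Definition top (S : nat -> Prop) m := S m /\ forall x, S x -> length (dec m) <= length (dec x).

Lemma isv_inj s x y : isv s x -> isv s y -> dec x = dec y -> x = y.
Proof. intros [Hx _] [Hy _] E. rewrite <- Hx, <- Hy, E. reflexivity. Qed.

Lemma F1 : forall s B m x, connected_in (Gr s) B -> top B m -> B x -> insub (dec m) (dec x).
Proof.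
  intros s B m x (Hv & Hne & Hw) [Hm Hmin] Hx.
  destruct (classic (insub (dec m) (dec x))) as [H|H]; auto. exfalso.
  destruct (Lw s B m x (Hw m x Hm Hx) (dec m) (ex_intro _ [] eq_refl) H) as [w [j [Bw E]]].
  specialize (Hmin w Bw). rewrite E in Hmin. simpl in Hmin. lia.
Qed.

Lemma F2 : forall s B m x, connected_in (Gr s) B -> top B m -> B x -> x <> m ->
  exists w j, B w /\ dec x = j :: dec w.
Proof.
  intros s B m x Hc Htop Hx Hne.
  pose proof Hc as (Hv & _ & Hw).
  apply (Lw s B x m (Hw x m Hx (proj1 Htop)) (dec x) (ex_intro _ [] eq_refl)).
  intros [p Hp]. destruct (F1 s B m x Hc Htop Hx) as [q Hq].
  assert (length p = 0 /\ length q = 0) as [Lp Lq].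
  { pose proof (f_equal (@length nat) Hp) as E1. pose proof (f_equal (@length nat) Hq) as E2.
    rewrite length_app in E1, E2. lia. }
  destruct p; [|simpl in Lp; discriminate]. simpl in Hp.
  apply Hne. apply (isv_inj s); [apply (Hv x Hx) | apply (Hv m (proj1 Htop)) | auto].
Qed.

Lemma either : forall s (Bv Bc : nat -> Prop) m mc x y,
  connected_in (Gr s) Bv -> connected_in (Gr s) Bc ->
  (forall z, Bv z -> Bc z -> False) ->
  top Bv m -> top Bc mc -> Bv x -> Bc y -> adj (Gr s) x y ->
  (exists q, q <> [] /\ dec mc = q ++ dec m) \/ (exists w j, Bc w /\ dec m = j :: dec w).
Proof.
  intros s Bv Bc m mc x y Hcv Hcc Hd Hm Hmc Hx Hy Hadj.
  pose proof Hcv as (Hvv & _ & Hwv). pose proof Hcc as (Hvc & _ & Hwc).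
  destruct Hadj as (Ix & Iy & [[j Hj]|[j Hj]]).
  - destruct (classic (x = m)) as [E|E].
    + subst. right. exists y, j. split; auto.
    + destruct (F2 s Bv m x Hcv Hm Hx E) as [w [j' [Bw Ew]]].
      rewrite Hj in Ew. injection Ew; intros E2 _.
      assert (w = y) by (apply (isv_inj s); [apply (Hvv w Bw) | exact Iy | auto]).
      subst. exfalso; eauto.
  - destruct (F1 s Bv m x Hcv Hm Hx) as [p Hp].
    destruct (classic (insub (dec m) (dec mc))) as [[q Hq]|Hn].
    + destruct q as [|q0 q].
      * simpl in Hq. assert (mc = m) by (apply (isv_inj s); auto; [apply Hvc, Hmc | apply Hvv, Hm]).
        subst. exfalso. apply (Hd m); [apply Hm | apply Hmc].
      * left. exists (q0 :: q). split; [discriminate | auto].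
    + right. apply (Lw s Bc y mc (Hwc y mc Hy (proj1 Hmc)) (dec m)); auto.
      exists (j :: p). rewrite Hj, Hp. reflexivity.
Qed.

Lemma isv_enc t a u : sub t a = Some u -> isv t (enc a).
Proof. intros E. split; rewrite dec_enc; [reflexivity| rewrite E; discriminate]. Qed.

Lemma claim : forall t s (B : nat -> nat -> Prop),
  (forall v, vert (Gr t) v -> connected_in (Gr s) (B v)) ->
  (forall u v, vert (Gr t) u -> vert (Gr t) v -> u <> v -> forall x, B u x -> B v x -> False) ->
  (forall u v, adj (Gr t) u v -> exists x y, B u x /\ B v y /\ adj (Gr s) x y) ->
  forall u, Dbl u -> forall a, sub t a = Some u -> forall m, top (B (enc a)) m ->
  exists su, sub s (dec m) = Some su /\ R u su.
Proof.
  intros t s B Hc Hd He u. induction u as [|f IH]; intros HD a Ha m Hm.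
  - assert (Hvm : isv s m) by (apply (Hc (enc a) (isv_enc t a _ Ha)); apply Hm).
    destruct (sub s (dec m)) eqn:E; [exists t0; simpl; auto | destruct Hvm; contradiction].
  - inversion HD as [|f' HDf Hdup]; subst.
    pose proof (isv_enc t a _ Ha) as Hva.
    pose proof (Hc _ Hva) as Hca.
    assert (Hvm : isv s m) by (apply Hca; apply Hm).
    assert (Key : forall i, exists j mc smc q0, sub s (dec mc) = Some smc /\ R (f i) smc /\
                   dec mc = q0 ++ j :: dec m).
    { intros i. destruct (Hdup i) as [i' [Hii' Hfi]].
      assert (Hsc : forall c, sub t (c :: a) = Some (f c)) by (intros c; simpl; rewrite Ha; auto).
      assert (Hvc : forall c, vert (Gr t) (enc (c :: a))) by (intros c; eapply isv_enc; eauto).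
      assert (Hac : forall c, adj (Gr t) (enc a) (enc (c :: a))).
      { intros c. split; [auto|split; [apply Hvc|]]. right. exists c. rewrite !dec_enc. auto. }
      assert (Hdc : forall c, enc a <> enc (c :: a)).
      { intros c E. apply (f_equal dec) in E. rewrite !dec_enc in E.
        apply (f_equal (@length nat)) in E. simpl in E. lia. }
      assert (Htop : forall c, exists mc, top (B (enc (c :: a))) mc).
      { intros c. destruct (Hc _ (Hvc c)) as (_ & Hne & _).
        destruct (exists_min _ (fun x => length (dec x)) Hne) as [mc Hmc]. exists mc; exact Hmc. }
      assert (Hei : forall c mc, top (B (enc (c :: a))) mc ->
         (exists q, q <> [] /\ dec mc = q ++ dec m) \/
         (exists w j, B (enc (c :: a)) w /\ dec m = j :: dec w)).
      { intros c mc Hmc. destruct (He _ _ (Hac c)) as [x [y [Bx [By Hxy]]]].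
        apply (either s (B (enc a)) (B (enc (c :: a))) m mc x y); auto.
        intros z H1 H2. apply (Hd (enc a) (enc (c :: a)) Hva (Hvc c) (Hdc c) z); auto. }
      assert (Hgo : forall c mc, f c = f i -> top (B (enc (c :: a))) mc ->
         (exists q, q <> [] /\ dec mc = q ++ dec m) ->
         exists j mc smc q0, sub s (dec mc) = Some smc /\ R (f i) smc /\ dec mc = q0 ++ j :: dec m).
      { intros c mc Hfc Hmc [q [Hq Eq]].
        destruct (IH c (HDf c) (c :: a) (Hsc c) mc Hmc) as [smc [Es HR]].
        destruct (exists_last Hq) as [q0 [j Eq0]]. subst q.
        exists j, mc, smc, q0. rewrite <- Hfc. split; auto. split; auto.
        rewrite Eq, <- app_assoc. reflexivity. }
      destruct (Htop i) as [m1 Hm1]. destruct (Htop i') as [m2 Hm2].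
      destruct (Hei i m1 Hm1) as [L1|[w1 [j1 [Bw1 E1]]]]; [apply (Hgo i m1); auto|].
      destruct (Hei i' m2 Hm2) as [L2|[w2 [j2 [Bw2 E2]]]]; [apply (Hgo i' m2); auto|].
      exfalso. rewrite E1 in E2. injection E2; intros E3 _.
      assert (w1 = w2).
      { apply (isv_inj s); auto.
        - apply (Hc _ (Hvc i)); auto.
        - apply (Hc _ (Hvc i')); auto. }
      subst w2.
      apply (Hd (enc (i :: a)) (enc (i' :: a)) (Hvc i) (Hvc i')) with w1; auto.
      intros E. apply (f_equal dec) in E. rewrite !dec_enc in E. injection E; intros; auto. }
    destruct (sub s (dec m)) as [su|] eqn:E; [| destruct Hvm; contradiction].
    destruct (Key 0) as [j0 [mc0 [smc0 [q00 [Es0 [_ Eq0]]]]]].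
    rewrite Eq0 in Es0. destruct (sub_desc _ _ _ _ Es0) as [y0 [Hy0 _]].
    simpl in Hy0. rewrite E in Hy0. destruct su as [|g]; [discriminate|].
    exists (N g). split; auto. simpl. exists g. split; [constructor|].
    intros i. destruct (Key i) as [j [mc [smc [q0 [Es [HR Eq]]]]]].
    rewrite Eq in Es. destruct (sub_desc _ _ _ _ Es) as [y [Hy Hdy]].
    simpl in Hy. rewrite E in Hy. injection Hy; intros; subst y.
    exists j. eapply R_mono; eauto.
Qed.

Lemma derive : forall t s, Dbl t -> minor (Gr t) (Gr s) -> R t s.
Proof.
  intros t s HD [B [Hc [Hd He]]].
  assert (Hv0 : vert (Gr t) (enc [])) by (apply (isv_enc t [] t); reflexivity).
  destruct (Hc _ Hv0) as (Hvs & Hne & Hw).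
  destruct (exists_min (B (enc [])) (fun x => length (dec x)) Hne) as [m Hm].
  destruct (claim t s B Hc Hd He t HD [] eq_refl m Hm) as [su [Hsu HR]].
  apply (R_mono t s su); auto.
  destruct (sub_desc (dec m) [] s su) as [y [Hy Hdy]]. rewrite app_nil_r; auto.
  simpl in Hy. injection Hy; intros; subst; auto.
Qed.

Definition Hg t := Gr (fat t).

Lemma sep : forall t d, pdesc t d -> ~ minor (Hg t) (Hg d).
Proof.
  intros t d Hp Hm. apply (pdesc_notR (fat t) (fat d)).
  - apply pdesc_fat; auto.
  - apply derive; [apply Dbl_fat | auto].
Qed.

Lemma minor_refl G : minor G G.
Proof.
  exists (fun v x => x = v /\ vert G v). split; [|split].
  - intros v Hv. split; [|split].
    + intros x [E _]; subst; auto.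
    + exists v; auto.
    + intros x y [E1 _] [E2 _]; subst. constructor. auto.
  - intros u v _ _ Huv x [E1 _] [E2 _]. subst. auto.
  - intros u v Huv. exists u, v. destruct (adj_vert G u v Huv). auto.
Qed.

Lemma minor_trans : forall H G K, minor H G -> minor G K -> minor H K.
Proof.
  intros H G K [B [Bc [Bd Be]]] [C [Cc [Cd Ce]]].
  exists (fun v y => exists x, B v x /\ C x y). split; [|split].
  - intros v Hv. destruct (Bc v Hv) as (Bv & [x0 Hx0] & Bw).
    split; [|split].
    + intros y [x [Hx Hy]]. destruct (Cc x (Bv x Hx)) as (Cv & _ & _). auto.
    + destruct (Cc x0 (Bv x0 Hx0)) as (_ & [y0 Hy0] & _). eauto.
    + intros y1 y2 [x1 [Hx1 Hy1]] [x2 [Hx2 Hy2]].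
      specialize (Bw x1 x2 Hx1 Hx2). revert y1 Hy1 y2 Hy2.
      induction Bw as [x Hx | x z x2' Hx Hadj Hw IH]; intros y1 Hy1 y2 Hy2.
      * destruct (Cc x (Bv x Hx)) as (_ & _ & Cw).
        eapply walk_mono; [|apply Cw; eauto]. intros w Hw; eauto.
      * destruct (Ce x z Hadj) as [p [q [Cp [Cq Hpq]]]].
        destruct (Cc x (Bv x Hx)) as (_ & _ & Cw).
        apply walk_app with p.
        -- eapply walk_mono; [|apply Cw; eauto]. intros w Hw'; eauto.
        -- econstructor; [eauto| exact Hpq|]. apply IH; auto. eapply walk_S; eauto.
  - intros u v Hu Hv Huv y [x1 [H1 Hy1]] [x2 [H2 Hy2]].
    destruct (Nat.eq_dec x1 x2) as [E|E].
    + subst. eapply Bd; eauto.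
    + apply (Cd x1 x2) with y; auto.
      * destruct (Bc u Hu) as (Bv & _). auto.
      * destruct (Bc v Hv) as (Bv & _). auto.
  - intros u v Huv. destruct (Be u v Huv) as [x [y [Bx [By Hxy]]]].
    destruct (Ce x y Hxy) as [p [q [Cp [Cq Hpq]]]]. exists p, q. split; [|split]; eauto.
Qed.

Definition Down t := fun G => minor G (Hg t).

Lemma Down_ok t : minor_closed (Down t) /\ has_universal (Down t).
Proof.
  split.
  - intros G H' HG HH. eapply minor_trans; eauto.
  - exists (Hg t). split; [apply minor_refl | auto].
Qed.

Fixpoint iter n t := match n with 0 => t | S n => N (fun _ => iter n t) end.

Definition Up t := fun G => exists n, minor G (Hg (iter n t)).

Lemma Up_ok t : minor_closed (Up t) /\ ~ has_universal (Up t).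
Proof.
  split.
  - intros G H' [n HG] HH. exists n. eapply minor_trans; eauto.
  - intros [U [[n Hn] Hall]].
    assert (Hm : minor (Hg (iter (S n) t)) U) by (apply Hall; exists (S n); apply minor_refl).
    apply (sep (iter (S n) t) (iter n t)).
    + exists (fun _ => iter n t), 0. split; [reflexivity | constructor].
    + eapply minor_trans; eauto.
Qed.

Theorem theorem1p7 :
  uncountably_many (fun C => minor_closed C /\ has_universal C) /\
  uncountably_many (fun C => minor_closed C /\ ~ has_universal C).
Proof.
  split.
  - intros [f Hf].
    pose (alpha := fun n => epsilon (inhabits L) (fun t => forall G, f n G <-> Down t G)).
    pose (beta := N alpha).
    destruct (Hf (Down beta) (Down_ok beta)) as [m Hm].
    assert (Ha : forall G, f m G <-> Down (alpha m) G).
    { apply (epsilon_spec (inhabits L) (fun t => forall G, f m G <-> Down t G)). exists beta; auto. }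
    assert (Hmin : minor (Hg beta) (Hg (alpha m))).
    { apply Ha, Hm. apply minor_refl. }
    revert Hmin. apply sep. exists alpha, m. split; [reflexivity | constructor].
  - intros [f Hf].
    pose (alpha := fun n => epsilon (inhabits L) (fun t => forall G, f n G <-> Up t G)).
    pose (beta := N (fun n => N (fun k => iter k (alpha n)))).
    destruct (Hf (Up beta) (Up_ok beta)) as [m Hm].
    assert (Ha : forall G, f m G <-> Up (alpha m) G).
    { apply (epsilon_spec (inhabits L) (fun t => forall G, f m G <-> Up t G)). exists beta; auto. }
    assert (Hmin : Up (alpha m) (Hg beta)).
    { apply Ha, Hm. exists 0. apply minor_refl. }
    destruct Hmin as [k Hk]. revert Hk. apply sep.
    exists (fun n => N (fun k => iter k (alpha n))), m. split; [reflexivity|].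
    apply (desc_step _ k). constructor.
Qed.
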